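(* Let $G$ be a graph with vertex set $V$ partitioned into $V_1,\dots,V_k$ with no edge inside any $V_i$, let $G'$, $X,Y,U$ be as constructed in the context, and let $S=V\cup X\cup U$, $T=V\cup Y\cup U$ and $\ell=8\binom{k}{2}+2k$. If $G$ contains a clique $\{v_1,\dots,v_k\}$ with $v_i\in V_i$ for all $i$, then there is a token sliding reconfiguration sequence of length at most $\ell$ from $S$ to $T$ in $G'$.
   Context: Construction of $G'$: start with $V$. For each edge $e=\{u,v\}$ of $G$ add a vertex $x_e$ adjacent to $u$ and $v$; let $E$ be the set of all $x_e$, and for each unordered pair $\{i,j\}$, $i\ne j$, let $\mathcal{E}_{ij}$ be the set of $x_e$ with $e$ joining $V_i$ and $V_j$; label these $\binom k2$ sets by $1,\dots,\binom k2$. Add independent sets $X=\{a_1,\dots,a_{\binom k2}\}$, $Y=\{b_1,\dots,b_{\binom k2}\}$. For each label $t$ and each $x_e$ in the set labeled $t$, add a path $a_t-p-q-r-x_e$ with three new internal vertices, putting the middle vertex $q$ into $U_1$, and a path $b_t-p'-q'-r'-x_e$ with three new internal vertices, putting $q'$ into $U_2$; $U=U_1\cup U_2$. For each $v\in V$ add a new vertex $z_v$ adjacent only to $v$. A token sliding reconfiguration sequence of length $m$ from $S$ to $T$ is a sequence $S=I_0,\dots,I_m=T$ of independent sets of size $|S|$ with each $I_{j+1}=(I_j\setminus\{u\})\cup\{w\}$ for some $u\in I_j$, $w\notin I_j$, $\{u,w\}\in E(G')$. *)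

(* Defs.v *)
From mathcomp Require Import all_boot.
Set Implicit Arguments. Unset Strict Implicit. Unset Printing Implicit Defensive.

Section Construction.
Variables (V : finType) (adj : rel V) (k : nat) (part : V -> 'I_k).

Definition Lab := {p : {set 'I_k} | #|p| == 2}.
Definition Ed := {e : {set V} | [exists u, [exists v, adj u v && (e == [set u; v])]]}.

(* Vertices of G':  V, z_v, a_t (X), b_t (Y), x_e (E), and internal path
   vertices (s, e, i): s = false for the path a_t - p - q - r - x_e,
   s = true for b_t - p' - q' - r' - x_e; i = 0,1,2 for p,q,r. *)
Definition gV := (((V + V) + (Lab + Lab)) + (Ed + (bool * Ed * 'I_3)))%type.

Definition vV (v : V) : gV := inl (inl (inl v)).
Definition vZ (v : V) : gV := inl (inl (inr v)).
Definition vA (t : Lab) : gV := inl (inr (inl t)).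
Definition vB (t : Lab) : gV := inl (inr (inr t)).
Definition vE (e : Ed) : gV := inr (inl e).
Definition vP (s : bool) (e : Ed) (i : 'I_3) : gV := inr (inr (s, e, i)).

Definition label (e : Ed) : {set 'I_k} := part @: (val e).

Definition gadj0 (x y : gV) : bool :=
  match x, y with
  | inr (inl e), inl (inl (inl v)) => v \in val e
  | inl (inl (inr z)), inl (inl (inl v)) => z == v
  | inl (inr (inl t)), inr (inr (s, e, i)) =>
      [&& ~~ s, val t == label e & nat_of_ord i == 0]
  | inl (inr (inr t)), inr (inr (s, e, i)) =>
      [&& s, val t == label e & nat_of_ord i == 0]
  | inr (inr (s, e, i)), inr (inr (s', e', i')) =>
      [&& s == s', e == e' & (nat_of_ord i).+1 == nat_of_ord i']
  | inr (inr (s, e, i)), inr (inl e') => (e == e') && (nat_of_ord i == 2)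
  | _, _ => false
  end.

Definition gadj (x y : gV) : bool := gadj0 x y || gadj0 y x.

Definition Xset : {set gV} := [set vA t | t : Lab].
Definition Yset : {set gV} := [set vB t | t : Lab].
Definition Uset : {set gV} := [set x | [exists s, [exists e, x == vP s e (inord 1)]]].
Definition Vset : {set gV} := [set vV v | v : V].
Definition Sset : {set gV} := Vset :|: Xset :|: Uset.
Definition Tset : {set gV} := Vset :|: Yset :|: Uset.

Definition gindep (I : {set gV}) : Prop :=
  forall x y, x \in I -> y \in I -> ~~ gadj x y.

Definition slide (I J : {set gV}) : Prop :=
  exists u w, [/\ u \in I, w \notin I, gadj u w & J = (I :\ u) :|: [set w]].

Definition ts_seq (S T : {set gV}) (m : nat) : Prop :=
  exists I : nat -> {set gV},
    [/\ I 0 = S, I m = T,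
        (forall j, j <= m -> gindep (I j) /\ #|I j| = #|S|)
      & (forall j, j < m -> slide (I j) (I j.+1))].

End Construction.

(* Main.v *)
Require Import Defs.
From mathcomp Require Import all_boot.
From mathcomp Require Import zify.
Set Implicit Arguments. Unset Strict Implicit. Unset Printing Implicit Defensive.

Section Proof.
Variables (V : finType) (adj : rel V) (k : nat) (part : V -> 'I_k).
Local Notation gV := (gV adj k).
Local Notation vV := (@vV V adj k).
Local Notation vZ := (@vZ V adj k).
Local Notation vA := (@vA V adj k).
Local Notation vB := (@vB V adj k).
Local Notation vE := (@vE V adj k).
Local Notation vP := (@vP V adj k).
Local Notation gadj := (@gadj V adj k part).
Local Notation ts := (@ts_seq V adj k part).
Local Notation gindep := (@gindep V adj k part).
Local Notation label := (@label V adj k part).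

Definition i0 : 'I_3 := @Ordinal 3 0 isT.
Definition i1 : 'I_3 := @Ordinal 3 1 isT.
Definition i2 : 'I_3 := @Ordinal 3 2 isT.

Lemma vPE s e i s' e' i' : (vP s e i == vP s' e' i') = [&& s == s', e == e' & i == i'].
Proof. by rewrite /vP /= andbA. Qed.
Lemma vVE v v' : (vV v == vV v') = (v == v'). Proof. by []. Qed.
Lemma vZE v v' : (vZ v == vZ v') = (v == v'). Proof. by []. Qed.
Lemma vAE t t' : (vA t == vA t') = (t == t'). Proof. by []. Qed.
Lemma vBE t t' : (vB t == vB t') = (t == t'). Proof. by []. Qed.
Lemma vEE e e' : (vE e == vE e') = (e == e'). Proof. by []. Qed.

Lemma gadjC x y : gadj x y = gadj y x. Proof. by rewrite /gadj orbC. Qed.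

Lemma gadj_irr x : gadj x x = false.
Proof.
case: x => [[[v|v]|[t|t]]|[e|[[s e] i]]] //=; rewrite /gadj /gadj0 /= ?eqxx //=.
by rewrite orbb (gtn_eqF (ltnSn i)).
Qed.

Lemma nbrP0 s e x : gadj (vP s e i0) x ->
  x = vP s e i1 \/ exists t, val t = label e /\ x = (if s then vB t else vA t).
Proof.
case: x => [[[v|v]|[t|t]]|[e'|[[s' e'] i']]]; rewrite /gadj /gadj0 /vP /i0 /i1 /i2 /= //.
all: try by rewrite ?andbF ?orbF.
all: try (case/and3P=> hs /eqP ht _; right; exists t; split=> //; by case: s hs).
case/orP => [/and3P[/eqP <- /eqP <- /eqP hi] | ]; last by case/and3P.
left.
by have -> : i' = i1 by apply/val_inj.
Qed.

Lemma nbrP1 s e x : gadj (vP s e i1) x -> x = vP s e i0 \/ x = vP s e i2.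
Proof.
case: x => [[[v|v]|[t|t]]|[e'|[[s' e'] i']]]; rewrite /gadj /gadj0 /vP /i0 /i1 /i2 /= //.
all: try by rewrite ?andbF ?orbF.
case/orP=> /and3P[/eqP <- /eqP <- /eqP hi].
  by right; have -> : i' = i2 by apply/val_inj.
by left; have -> : i' = i0 by apply/val_inj; case: hi.
Qed.

Lemma nbrP2 s e x : gadj (vP s e i2) x -> x = vP s e i1 \/ x = vE e.
Proof.
case: x => [[[v|v]|[t|t]]|[e'|[[s' e'] i']]]; rewrite /gadj /gadj0 /vP /i0 /i1 /i2 /= //.
all: try by rewrite ?andbF ?orbF.
  by rewrite eqxx andbT orbF => /eqP <-; right.
case/orP=> /and3P[/eqP <- /eqP <- /eqP hi].
  by move: (ltn_ord i'); rewrite -hi.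
by left; have -> : i' = i1 by apply/val_inj; case: hi.
Qed.

Lemma nbrE e x : gadj (vE e) x ->
  (exists2 v, v \in val e & x = vV v) \/ exists s, x = vP s e i2.
Proof.
case: x => [[[v|v]|[t|t]]|[e'|[[s' e'] i']]]; rewrite /gadj /gadj0 /vP /i0 /i1 /i2 /= //.
all: try by rewrite ?andbF ?orbF.
  by rewrite orbF => h; left; exists v.
rewrite andbC => /andP[/eqP hi /eqP ->]; right; exists s'.
by have -> : i' = i2 by apply/val_inj.
Qed.

Lemma nbrZ v x : gadj (vZ v) x -> x = vV v.
Proof.
case: x => [[[w|w]|[t|t]]|[e'|[[s' e'] i']]]; rewrite /gadj /gadj0 /i0 /i1 /i2 /= //.
all: try by rewrite ?andbF ?orbF.
by rewrite orbF => /eqP ->.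
Qed.

Lemma nbrV v x : gadj (vV v) x -> x = vZ v \/ exists e, x = vE e.
Proof.
case: x => [[[w|w]|[t|t]]|[e'|[[s' e'] i']]]; rewrite /gadj /gadj0 /i0 /i1 /i2 /= //.
all: try by rewrite ?andbF ?orbF.
- by move/eqP->; left.
- by move=> _; right; exists e'.
Qed.

Lemma nbrA t x : gadj (vA t) x -> exists e, x = vP false e i0.
Proof.
case: x => [[[w|w]|[t'|t']]|[e'|[[s' e'] i']]]; rewrite /gadj /gadj0 /i0 /i1 /i2 /= //.
all: try by rewrite ?andbF ?orbF.
rewrite orbF => /and3P[hs _ /eqP hi]; exists e'; case: s' hs => // _.
by have -> : i' = i0 by apply/val_inj.
Qed.

Lemma nbrB t x : gadj (vB t) x -> exists e, x = vP true e i0.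
Proof.
case: x => [[[w|w]|[t'|t']]|[e'|[[s' e'] i']]]; rewrite /gadj /gadj0 /i0 /i1 /i2 /= //.
all: try by rewrite ?andbF ?orbF.
rewrite orbF => /and3P[hs _ /eqP hi]; exists e'; case: s' hs => // _.
by have -> : i' = i0 by apply/val_inj.
Qed.


Lemma ts_refl S0 : gindep S0 -> ts S0 S0 0.
Proof. by move=> hS; exists (fun _ => S0); split=> // j _; split. Qed.

Lemma ts_step S0 I m u w : ts S0 I m -> u \in I -> w \notin I -> gadj u w ->
  (forall x, x \in I -> gadj w x -> x = u) -> ts S0 ((I :\ u) :|: [set w]) m.+1.
Proof.
case=> J [J0 Jm Jind Jsl] uI wI huw hnb.
have [indI cI] : gindep I /\ #|I| = #|S0| by rewrite -Jm; exact: (Jind m (leqnn m)).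
exists (fun j => if j <= m then J j else (I :\ u) :|: [set w]); split.
- by rewrite leq0n.
- by rewrite ltnn.
- move=> j _; case: (leqP j m) => hj; first exact: (Jind j hj).
  split.
  + move=> x y; rewrite !inE => hx hy.
    case/orP: hx => [/andP[xu xI]|/eqP->]; case/orP: hy => [/andP[yu yI]|/eqP->].
    * exact: indI.
    * rewrite gadjC; apply/negP => h; by rewrite (hnb _ xI h) eqxx in xu.
    * apply/negP => h; by rewrite (hnb _ yI h) eqxx in yu.
    * by rewrite gadj_irr.
  + rewrite setUC cardsU1 in_setD1 (negbTE wI) andbF /= -cI (cardsD1 u I) uI.
    by [].
- move=> j hj; case: (ltnP j m) => hjm.
  + rewrite (ltnW hjm); exact: Jsl.
  + rewrite ltnS in hj.
    have -> : j = m by apply/eqP; rewrite eqn_leq hj hjm.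
    rewrite leqnn Jm; exists u, w; split=> //.
Qed.

Lemma collapse (T : finType) (I : {set T}) u w w' : w \notin I ->
  ((I :\ u) :|: [set w]) :\ w :|: [set w'] = (I :\ u) :|: [set w'].
Proof.
move=> hw; apply/setP=> y; rewrite !inE.
by case: (eqVneq y w) => [->|] /=; rewrite ?(negbTE hw) ?andbF ?orbF.
Qed.

Variable f : 'I_k -> V.
Hypothesis hf : forall i, part (f i) = i.
Hypothesis hcl : forall i j, i != j -> adj (f i) (f j).

Definition occ (D : {set 'I_k}) (L : seq (Lab k)) (x : gV) : bool :=
  match x with
  | inl (inl (inl v)) => ~~ ((part v \in D) && (f (part v) == v))
  | inl (inl (inr v)) => (part v \in D) && (f (part v) == v)
  | inl (inr (inl t)) => t \notin L
  | inl (inr (inr t)) => t \in L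
  | inr (inl _) => false
  | inr (inr (_, _, i)) => i == i1
  end.

Definition cfg D L : {set gV} := [set x | occ D L x].

Lemma cfg_indep D L : gindep (cfg D L).
Proof.
move=> x y hx hy; apply/negP=> h.
move: hx hy; rewrite /cfg !inE.
case: x h => [[[v|v]|[t|t]]|[e|[[s e] i]]] h /=.
- case/nbrV: h => [->|[e ->]] /=; last by [].
  by move=> /negbTE ->.
- by move/nbrZ: h => -> /= ->.
- by case/nbrA: h => e -> _.
- by case/nbrB: h => e -> _.
- by [].
- by move=> /eqP hi; move: h; rewrite hi => /nbrP1 [->|->].
Qed.


Lemma n01 : (0 == 1) = false. Proof. by []. Qed.
Lemma n10 : (1 == 0) = false. Proof. by []. Qed.
Lemma n02 : (0 == 2) = false. Proof. by []. Qed.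
Lemma n20 : (2 == 0) = false. Proof. by []. Qed.
Lemma n12 : (1 == 2) = false. Proof. by []. Qed.
Lemma n21 : (2 == 1) = false. Proof. by []. Qed.

Lemma ne_vV_vZ (v1 : V) (v2 : V) : (vV v1 == vZ v2) = false. Proof. by []. Qed.
Lemma ne_vV_vA (v1 : V) (t2 : Lab k) : (vV v1 == vA t2) = false. Proof. by []. Qed.
Lemma ne_vV_vB (v1 : V) (t2 : Lab k) : (vV v1 == vB t2) = false. Proof. by []. Qed.
Lemma ne_vV_vE (v1 : V) (e2 : Ed adj) : (vV v1 == vE e2) = false. Proof. by []. Qed.
Lemma ne_vV_vP (v1 : V) (s2 : bool) (e2 : Ed adj) (i2 : 'I_3) : (vV v1 == vP s2 e2 i2) = false. Proof. by []. Qed.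
Lemma ne_vZ_vV (v1 : V) (v2 : V) : (vZ v1 == vV v2) = false. Proof. by []. Qed.
Lemma ne_vZ_vA (v1 : V) (t2 : Lab k) : (vZ v1 == vA t2) = false. Proof. by []. Qed.
Lemma ne_vZ_vB (v1 : V) (t2 : Lab k) : (vZ v1 == vB t2) = false. Proof. by []. Qed.
Lemma ne_vZ_vE (v1 : V) (e2 : Ed adj) : (vZ v1 == vE e2) = false. Proof. by []. Qed.
Lemma ne_vZ_vP (v1 : V) (s2 : bool) (e2 : Ed adj) (i2 : 'I_3) : (vZ v1 == vP s2 e2 i2) = false. Proof. by []. Qed.
Lemma ne_vA_vV (t1 : Lab k) (v2 : V) : (vA t1 == vV v2) = false. Proof. by []. Qed.
Lemma ne_vA_vZ (t1 : Lab k) (v2 : V) : (vA t1 == vZ v2) = false. Proof. by []. Qed.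
Lemma ne_vA_vB (t1 : Lab k) (t2 : Lab k) : (vA t1 == vB t2) = false. Proof. by []. Qed.
Lemma ne_vA_vE (t1 : Lab k) (e2 : Ed adj) : (vA t1 == vE e2) = false. Proof. by []. Qed.
Lemma ne_vA_vP (t1 : Lab k) (s2 : bool) (e2 : Ed adj) (i2 : 'I_3) : (vA t1 == vP s2 e2 i2) = false. Proof. by []. Qed.
Lemma ne_vB_vV (t1 : Lab k) (v2 : V) : (vB t1 == vV v2) = false. Proof. by []. Qed.
Lemma ne_vB_vZ (t1 : Lab k) (v2 : V) : (vB t1 == vZ v2) = false. Proof. by []. Qed.
Lemma ne_vB_vA (t1 : Lab k) (t2 : Lab k) : (vB t1 == vA t2) = false. Proof. by []. Qed.
Lemma ne_vB_vE (t1 : Lab k) (e2 : Ed adj) : (vB t1 == vE e2) = false. Proof. by []. Qed.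
Lemma ne_vB_vP (t1 : Lab k) (s2 : bool) (e2 : Ed adj) (i2 : 'I_3) : (vB t1 == vP s2 e2 i2) = false. Proof. by []. Qed.
Lemma ne_vE_vV (e1 : Ed adj) (v2 : V) : (vE e1 == vV v2) = false. Proof. by []. Qed.
Lemma ne_vE_vZ (e1 : Ed adj) (v2 : V) : (vE e1 == vZ v2) = false. Proof. by []. Qed.
Lemma ne_vE_vA (e1 : Ed adj) (t2 : Lab k) : (vE e1 == vA t2) = false. Proof. by []. Qed.
Lemma ne_vE_vB (e1 : Ed adj) (t2 : Lab k) : (vE e1 == vB t2) = false. Proof. by []. Qed.
Lemma ne_vE_vP (e1 : Ed adj) (s2 : bool) (e2 : Ed adj) (i2 : 'I_3) : (vE e1 == vP s2 e2 i2) = false. Proof. by []. Qed.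
Lemma ne_vP_vV (s1 : bool) (e1 : Ed adj) (i1 : 'I_3) (v2 : V) : (vP s1 e1 i1 == vV v2) = false. Proof. by []. Qed.
Lemma ne_vP_vZ (s1 : bool) (e1 : Ed adj) (i1 : 'I_3) (v2 : V) : (vP s1 e1 i1 == vZ v2) = false. Proof. by []. Qed.
Lemma ne_vP_vA (s1 : bool) (e1 : Ed adj) (i1 : 'I_3) (t2 : Lab k) : (vP s1 e1 i1 == vA t2) = false. Proof. by []. Qed.
Lemma ne_vP_vB (s1 : bool) (e1 : Ed adj) (i1 : 'I_3) (t2 : Lab k) : (vP s1 e1 i1 == vB t2) = false. Proof. by []. Qed.
Lemma ne_vP_vE (s1 : bool) (e1 : Ed adj) (i1 : 'I_3) (e2 : Ed adj) : (vP s1 e1 i1 == vE e2) = false. Proof. by []. Qed.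
Definition neE := (ne_vV_vZ, ne_vV_vA, ne_vV_vB, ne_vV_vE, ne_vV_vP, ne_vZ_vV, ne_vZ_vA, ne_vZ_vB, ne_vZ_vE, ne_vZ_vP, ne_vA_vV, ne_vA_vZ, ne_vA_vB, ne_vA_vE, ne_vA_vP, ne_vB_vV, ne_vB_vZ, ne_vB_vA, ne_vB_vE, ne_vB_vP, ne_vE_vV, ne_vE_vZ, ne_vE_vA, ne_vE_vB, ne_vE_vP, ne_vP_vV, ne_vP_vZ, ne_vP_vA, ne_vP_vB, ne_vP_vE).
Lemma i01 : (i0 == i1) = false. Proof. by []. Qed.
Lemma i02 : (i0 == i2) = false. Proof. by []. Qed.
Lemma i10 : (i1 == i0) = false. Proof. by []. Qed.
Lemma i12 : (i1 == i2) = false. Proof. by []. Qed.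
Lemma i20 : (i2 == i0) = false. Proof. by []. Qed.
Lemma i21 : (i2 == i1) = false. Proof. by []. Qed.
Definition iE := (i01, i02, i10, i12, i20, i21).

Ltac simp := rewrite /cfg ?inE /occ /= ?neE ?vVE ?vZE ?vAE ?vBE ?vEE ?vPE ?iE
  ?eqxx /= ?inE ?andbF ?andbT ?orbF ?orbT ?in_setT /=.

Lemma vfw S0 D L m i : ts S0 (cfg D L) m -> i \notin D -> ts S0 (cfg (i |: D) L) m.+1.
Proof.
move=> h hi.
have <- : (cfg D L :\ vV (f i)) :|: [set vZ (f i)] = cfg (i |: D) L.
  apply/setP => y; case: y => [[[v|v]|[t|t]]|[e|[[s e] j]]]; simp => //.
  - case: (eqVneq v (f i)) => [->|nv] /=; first by rewrite hf !eqxx.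
    case: (eqVneq (part v) i) => [pv|] //=.
    by rewrite pv (negbTE hi) eq_sym (negbTE nv).
  - case: (eqVneq v (f i)) => [->|nv] /=; first by rewrite hf !eqxx ?orbT.
    rewrite orbF; case: (eqVneq (part v) i) => [pv|] //=.
    by rewrite pv (negbTE hi) eq_sym (negbTE nv).
apply: (ts_step h).
- by simp; rewrite hf (negbTE hi).
- by simp; rewrite hf (negbTE hi).
- by rewrite /gadj /gadj0 /= ?eqxx ?orbT.
- by move=> x _ /nbrZ.
Qed.

Lemma vbw S0 D L m i : ts S0 (cfg D L) m -> i \in D -> ts S0 (cfg (D :\ i) L) m.+1.
Proof.
move=> h hi.
have <- : (cfg D L :\ vZ (f i)) :|: [set vV (f i)] = cfg (D :\ i) L.
  apply/setP => y; case: y => [[[v|v]|[t|t]]|[e|[[s e] j]]]; simp => //.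
  - case: (eqVneq v (f i)) => [->|nv] /=; first by rewrite hf !eqxx ?orbT.
    rewrite orbF; case: (eqVneq (part v) i) => [pv|] //=.
    by rewrite pv eq_sym (negbTE nv) !andbF.
  - case: (eqVneq v (f i)) => [->|nv] /=; first by rewrite hf !eqxx.
    case: (eqVneq (part v) i) => [pv|] //=.
    by rewrite pv eq_sym (negbTE nv) !andbF.
apply: (ts_step h).
- by simp; rewrite hf hi ?eqxx.
- by simp; rewrite hf hi ?eqxx.
- by rewrite /gadj /gadj0 /= ?eqxx ?orbT.
- by move=> x hx /nbrV [//|[e ex]]; move: hx; rewrite ex; simp.
Qed.


Lemma adjE_P s e a s2 e2 b :
  gadj (vP s e a) (vP s2 e2 b) =
  [&& s == s2, e == e2 & a.+1 == b] || [&& s2 == s, e2 == e & b.+1 == a].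
Proof. by []. Qed.

Lemma phase S0 L m t : ts S0 (cfg setT L) m -> t \notin L -> ts S0 (cfg setT (t :: L)) (8 + m).
Proof.
move=> h tL.
have /cards2P [i [j [ij ht]]] := valP t.
have [e [he le]] : exists e : Ed adj, val e = [set f i; f j] /\ label e = val t.
  have ee : [exists u, [exists v, adj u v && ([set f i; f j] == [set u; v])]].
    by apply/existsP; exists (f i); apply/existsP; exists (f j); rewrite hcl // eqxx.
  exists (exist _ [set f i; f j] ee); split=> //.
  by rewrite /label /= imsetU1 imset_set1 !hf ht.
have lt : forall t', val t' = label e -> t' = t by move=> t'; rewrite le => /val_inj.
pose I0 := cfg setT L.
have h1 : ts S0 ((I0 :\ vP true e i1) :|: [set vP true e i0]) m.+1.
  apply: (ts_step h).
  - by simp.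
  - by simp.
  - by rewrite adjE_P !eqxx.
  - move=> x hx /nbrP0 [//|[t' [ht' ex]]]; move: hx; rewrite ex (lt _ ht') /=.
    by simp; rewrite (negbTE tL).
pose I2 := (I0 :\ vP true e i1) :|: [set vB t].
have h2 : ts S0 I2 m.+2.
  rewrite /I2 -(@collapse _ I0 _ (vP true e i0)); last by simp.
  apply: (ts_step h1).
  - by simp.
  - by simp; rewrite (negbTE tL).
  - by rewrite /gadj /gadj0 /= le !eqxx.
  - move=> x hx /nbrB [e' ex]; move: hx; rewrite ex; simp.
    by move/eqP->.
have h3 : ts S0 ((I2 :\ vP false e i1) :|: [set vP false e i2]) m.+3.
  apply: (ts_step h2).
  - by simp.
  - by simp.
  - by rewrite adjE_P !eqxx.
  - by move=> x hx /nbrP2 [//|ex]; move: hx; rewrite ex; simp.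
have h4 : ts S0 ((I2 :\ vP false e i1) :|: [set vE e]) m.+4.
  rewrite -(@collapse _ I2 _ (vP false e i2)); last by simp.
  apply: (ts_step h3).
  - by simp.
  - by simp.
  - by rewrite /gadj /gadj0 /= !eqxx.
  - move=> x hx /nbrE [[v hv ex]|[s' ex]]; subst x; move: hx; simp.
    + move: hv; rewrite he !inE => /orP[] /eqP ->; by rewrite hf eqxx.
    + by case: s'.
have h5 : ts S0 ((I2 :\ vP false e i1) :|: [set vP true e i2]) m.+4.+1.
  rewrite -(@collapse _ I2 _ (vE e)); last by simp.
  apply: (ts_step h4).
  - by simp.
  - by simp.
  - by rewrite /gadj /gadj0 /= !eqxx ?orbT.
  - by move=> x hx /nbrP2 [ex|//]; subst x; move: hx; simp.
pose I6 := (I2 :\ vP false e i1) :|: [set vP true e i1].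
have h6 : ts S0 I6 m.+4.+2.
  rewrite /I6 -(@collapse _ I2 _ (vP true e i2)); last by simp.
  apply: (ts_step h5).
  - by simp.
  - by simp.
  - by rewrite adjE_P !eqxx ?orbT.
  - by move=> x hx /nbrP1 [ex|//]; subst x; move: hx; simp.
have h7 : ts S0 ((I6 :\ vA t) :|: [set vP false e i0]) m.+4.+3.
  apply: (ts_step h6).
  - by simp; rewrite tL.
  - by simp.
  - by rewrite /gadj /gadj0 /= le !eqxx ?orbT.
  - move=> x hx /nbrP0 [ex|[t' [ht' ex]]]; subst x; first by move: hx; simp.
    by rewrite (lt _ ht').
have h8 : ts S0 ((I6 :\ vA t) :|: [set vP false e i1]) m.+4.+4.
  rewrite -(@collapse _ I6 _ (vP false e i0)); last by simp.
  apply: (ts_step h7).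
  - by simp.
  - by simp.
  - by rewrite adjE_P !eqxx ?orbT.
  - by move=> x hx /nbrP1 [//|ex]; subst x; move: hx; simp.
have <- : (I6 :\ vA t) :|: [set vP false e i1] = cfg setT (t :: L).
  apply/setP => y; rewrite /I6 /I2 /I0.
  case: y => [[[v|v]|[t'|t']]|[e'|[[s e'] a]]]; simp.
  all: try by [].
  - by rewrite negb_or.
  - by rewrite orbC.
  - by case: s; case: (e' == e); case: (a == i1).
Qed.


Lemma inord1E : inord 1 = i1 :> 'I_3.
Proof. by apply/val_inj; rewrite /= inordK. Qed.

Lemma memV y : (y \in Vset adj k) = (if y is inl (inl (inl _)) then true else false).
Proof.
case: y => [[[v|v]|[t|t]]|[e|[[s e] i]]] /=; first by apply/imsetP; exists v.
all: by apply/negbTE/imsetP => -[x].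
Qed.

Lemma memX y : (y \in Xset adj k) = (if y is inl (inr (inl _)) then true else false).
Proof.
case: y => [[[v|v]|[t|t]]|[e|[[s e] i]]] /=; try by apply/imsetP; exists t.
all: by apply/negbTE/imsetP => -[x].
Qed.

Lemma memY y : (y \in Yset adj k) = (if y is inl (inr (inr _)) then true else false).
Proof.
case: y => [[[v|v]|[t|t]]|[e|[[s e] i]]] /=; try by apply/imsetP; exists t.
all: by apply/negbTE/imsetP => -[x].
Qed.

Lemma memU y : (y \in Uset adj k) = (if y is inr (inr (_, _, i)) then i == i1 else false).
Proof.
rewrite inE; case: y => [[[v|v]|[t|t]]|[e|[[s e] i]]] /=.
all: try by apply/negbTE/existsP => -[s' /existsP [e' /eqP]].
apply/idP/idP.
  by case/existsP => s' /existsP [e' /eqP [_ _ ->]]; rewrite inord1E.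
by move/eqP->; apply/existsP; exists s; apply/existsP; exists e; rewrite inord1E.
Qed.

Lemma eS : Sset adj k = cfg set0 [::].
Proof.
apply/setP => y; rewrite /Sset !in_setU memV memX memU.
by case: y => [[[v|v]|[t|t]]|[e|[[s e] i]]]; simp.
Qed.

Lemma eT : Tset adj k = cfg set0 (enum {: Lab k}).
Proof.
apply/setP => y; rewrite /Tset !in_setU memV memY memU.
by case: y => [[[v|v]|[t|t]]|[e|[[s e] i]]]; simp; rewrite ?mem_enum.
Qed.

Lemma cardLab : #|{: Lab k}| = 'C(k, 2).
Proof.
rewrite /Lab card_sig; have := card_draws 'I_k 2; rewrite card_ord => <-.
by apply: eq_card => x; rewrite !inE.
Qed.

Lemma main_sec : exists m, m <= 8 * 'C(k, 2) + 2 * k /\ ts (Sset adj k) (Tset adj k) m.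
Proof.
have fw : forall s, uniq s -> ts (cfg set0 [::]) (cfg [set:: s] [::]) (size s).
  elim=> [|i s IH] /=; first by move=> _; rewrite set_nil; apply: ts_refl; apply: cfg_indep.
  case/andP=> his us; rewrite set_cons; apply: vfw (IH us) _; by rewrite inE.
have h1 := fw (enum 'I_k) (enum_uniq _).
have eT1 : [set:: enum 'I_k] = setT by apply/setP => x; rewrite !inE mem_enum.
rewrite eT1 size_enum_ord in h1.
have lab : forall s, uniq s -> ts (cfg set0 [::]) (cfg setT s) (8 * size s + k).
  elim=> [|t s IH] /=; first by rewrite muln0 add0n.
  case/andP=> hts us; have := phase (IH us) hts.
  by rewrite mulnS -addnA.
have h2 := lab (enum {: Lab k}) (enum_uniq _).
have bw : forall s, uniq s -> ts (cfg set0 [::]) (cfg (~: [set:: s]) (enum {: Lab k}))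
    (size s + (8 * size (enum {: Lab k}) + k)).
  elim=> [|i s IH] /=; first by rewrite set_nil setC0 add0n.
  case/andP => his us.
  have hi : i \in ~: [set:: s] by rewrite !inE his.
  have := vbw (IH us) hi.
  have -> : ~: [set:: i :: s] = ~: [set:: s] :\ i.
    by apply/setP => x; rewrite !inE negb_or andbC.
  by [].
have h3 := bw (enum 'I_k) (enum_uniq _).
have eC : ~: [set:: enum 'I_k] = set0 by apply/setP => x; rewrite !inE mem_enum.
rewrite eC size_enum_ord in h3.
exists (k + (8 * #|{: Lab k}| + k)); split.
  rewrite cardLab; lia.
by rewrite eS eT cardE.
Qed.

End Proof.

Unset Implicit Arguments.
Set Strict Implicit.

Theorem lemma5p2 (V : finType) (adj : rel V) (k : nat) (part : V -> 'I_k)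
  (adj_sym : symmetric adj) (adj_irr : irreflexive adj)
  (hpart : forall u v, adj u v -> part u != part v)
  (hclique : exists f : 'I_k -> V,
      (forall i, part (f i) = i) /\ (forall i j, i != j -> adj (f i) (f j))) :
  exists m, m <= 8 * 'C(k, 2) + 2 * k /\
    @ts_seq V adj k part (@Sset V adj k) (@Tset V adj k) m.
Proof.
case: hclique => f [hf hcl].
exact: (main_sec hf hcl).
Qed.
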